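(* Let $R$ be a commutative unital ring and $E$ an $R$-module. Then $\mathrm{Supp}_R(E)$ is Zariski closed in $\mathrm{Spec}(R)$ if and only if $\mathrm{Supp}_R(E)$ is pro-constructible. Moreover $\mathrm{Supp}_R(E)$ is Zariski closed in each of the following cases: (1) $\mathrm{Supp}_R(E)$ is finite; (2) $\mathrm{Ass}_R(E)$ is compact in the flat topology, for example if $\mathrm{Ass}_R(E)$ is pro-constructible, or finite, or closed; (3) $E$ has finite length; (4) $E$ is almost finitely generated over $R$; in this case $\mathrm V(\mathcal O_R(E))=\mathrm{Supp}_R(E)=\mathrm V(0:_RE)$ and $\mathcal O_R(E)=\sqrt{0:_RE}$.
   Context: $\mathrm{Supp}_R(E)=\{P\in\mathrm{Spec}(R)\mid E_P\neq0\}$; $\mathrm V(I)=\{P\mid I\subseteq P\}$. A subset of $\mathrm{Spec}(R)$ is pro-constructible if it is the image of $\mathrm{Spec}(T)\to\mathrm{Spec}(R)$ for some ring morphism $R\to T$. $\mathrm{Ass}_R(E)$ is the set of primes minimal among primes containing $0:_Rx$ for some $x\in E$. The flat topology on $\mathrm{Spec}(R)$ has as closed sets the images of spectra of flat $R$-algebras; the sets $\mathrm V(I)$ with $I$ finitely generated form a basis of its open sets; compactness does not require Hausdorffness. $E$ is almost finitely generated (afg) over $R$ if there is a ring morphism $R\to S$ such that $E$ is a finitely generated $S$-module whose induced $R$-module structure is the original one. $E_a$ is the localization at $\{a^n\}$ and $\mathcal O_R(E)=\{a\in R\mid E_a=0\}$. *)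

(* Defs.v *)
From HB Require Import structures.
From Stdlib Require List.
From mathcomp Require Import all_boot all_order all_algebra.
Set Implicit Arguments. Unset Strict Implicit. Unset Printing Implicit Defensive.
Import GRing.Theory.
Local Open Scope ring_scope.

Definition prime_ideal (R : comPzRingType) (P : R -> Prop) : Prop :=
  [/\ P 0, (forall x y, P x -> P y -> P (x + y)),
      (forall r x, P x -> P (r * x)), ~ P 1
    & (forall x y, P (x * y) -> P x \/ P y)].

Section CommAlg.
Variable R : comPzRingType.

Definition Spec : Type := {P : R -> Prop | @prime_ideal R P}.

Definition Vset (A : R -> Prop) : Spec -> Prop :=
  fun P => forall a, A a -> proj1_sig P a.

Definition zariski_closed (X : Spec -> Prop) : Prop :=
  exists A : R -> Prop, forall P, X P <-> Vset A P.

(* pro-constructible: image of Spec T -> Spec R for a ring morphism R -> T *)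
Definition pro_constructible (X : Spec -> Prop) : Prop :=
  exists (T : comPzRingType) (f : {rmorphism R -> T}),
    forall P : Spec, X P <->
      exists Q : {Q : T -> Prop | @prime_ideal T Q},
        forall r, proj1_sig P r <-> proj1_sig Q (f r).

Definition finite_set (X : Spec -> Prop) : Prop :=
  exists l : list Spec, forall P, X P -> List.In P l.

(* flat topology: open sets are unions of the basic sets V(I), I finitely
   generated (I generated by the finite list l, so V(I) = V(l)) *)
Definition Vlist (l : seq R) : Spec -> Prop := Vset (fun a => a \in l).

Definition flat_open (U : Spec -> Prop) : Prop :=
  forall P, U P -> exists l : seq R, Vlist l P /\ forall Q, Vlist l Q -> U Q.

Definition flat_closed (X : Spec -> Prop) : Prop :=
  flat_open (fun P => ~ X P).

Definition flat_compact (X : Spec -> Prop) : Prop :=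
  forall (I : Type) (U : I -> Spec -> Prop),
    (forall i, flat_open (U i)) ->
    (forall P, X P -> exists i, U i P) ->
    exists l : list I, forall P, X P -> exists i, List.In i l /\ U i P.

Variable E : lmodType R.

(* E_P = 0 : every fraction x/s vanishes, i.e. t *: x = 0 for some t notin P *)
Definition loc_prime_zero (P : Spec) : Prop :=
  forall x : E, exists t : R, ~ proj1_sig P t /\ t *: x = 0.

Definition Supp : Spec -> Prop := fun P => ~ loc_prime_zero P.

Definition ann_elt (x : E) : R -> Prop := fun r => r *: x = 0.
Definition ann_mod : R -> Prop := fun r => forall x : E, r *: x = 0.

Definition Ass : Spec -> Prop := fun P =>
  exists x : E,
    (forall r, ann_elt x r -> proj1_sig P r) /\
    (forall Q : Spec, (forall r, ann_elt x r -> proj1_sig Q r) ->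
        (forall r, proj1_sig Q r -> proj1_sig P r) ->
        (forall r, proj1_sig P r -> proj1_sig Q r)).

Definition loc_elt_zero (a : R) : Prop :=
  forall x : E, exists n : nat, a ^+ n *: x = 0.

Definition OR : R -> Prop := fun a => loc_elt_zero a.

Definition radical (I : R -> Prop) : R -> Prop :=
  fun a => exists n : nat, I (a ^+ n).

Definition submodule (M : E -> Prop) : Prop :=
  [/\ M 0, (forall x y, M x -> M y -> M (x + y))
    & (forall r x, M x -> M (r *: x))].

Definition finite_length : Prop :=
  exists n : nat, forall (k : nat) (M : nat -> E -> Prop),
    (forall i, submodule (M i)) ->
    (forall i, (i < k)%N ->
       (forall x, M i x -> M i.+1 x) /\ (exists x, M i.+1 x /\ ~ M i x)) ->
    (k <= n)%N.

Definition afg : Prop :=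
  exists (S : comPzRingType) (f : {rmorphism R -> S}) (act : S -> E -> E),
    [/\ (forall s x y, act s (x + y) = act s x + act s y),
        (forall s t x, act (s + t) x = act s x + act t x),
        (forall s t x, act (s * t) x = act s (act t x)),
        (forall x, act 1 x = x)
      & (forall r x, act (f r) x = r *: x)] /\
    exists gens : seq E, forall x : E, exists c : nat -> S,
      x = \sum_(i < size gens) act (c i) (nth 0 gens i).

End CommAlg.

(* Main.v *)
From HB Require Import structures.
Require Import Defs.
From mathcomp Require Import all_boot all_order all_algebra.
From mathcomp Require Import boolp classical_sets.
From mathcomp Require Import ring.
From mathcomp Require Import ring_quotient generic_quotient.
Set Implicit Arguments. Unset Strict Implicit. Unset Printing Implicit Defensive.
Import GRing.Theory.
Local Open Scope ring_scope.

Lemma zorn_max T (Psi : (T -> Prop) -> Prop) (J0 : T -> Prop) :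
  Psi J0 ->
  (forall F : (T -> Prop) -> Prop, (forall X, F X -> Psi X) ->
     (forall X Y, F X -> F Y -> (forall t, X t -> Y t) \/ (forall t, Y t -> X t)) ->
     (exists X, F X) -> Psi (fun t => exists X, F X /\ X t)) ->
  exists M, (forall t, J0 t -> M t) /\ Psi M /\
    forall B, Psi B -> (forall t, M t -> B t) -> forall t, B t -> M t.
Proof.
move=> H0 Hch.
pose P' : set (set T) := fun X => Psi (fun t => X t \/ J0 t).
have [A [PA Amax]] : exists A, P' A /\ forall B, (A `<` B)%classic -> ~ P' B.
  apply: Zorn_bigcup => F FP Ftot.
  have [[X FX]|nF] := pselect (exists X, F X); last first.
    rewrite /P'; have -> : (fun t => (\bigcup_(X in F) X)%classic t \/ J0 t) = J0.
      apply: funext => t; apply: propext; split; last by right.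
      by case=> // -[X FX _]; case: nF; exists X.
    exact: H0.
  have := Hch (fun Y => exists X, F X /\ Y = (fun t => X t \/ J0 t)).
  have -> : (fun t => exists Y, (exists X, F X /\ Y = (fun t => X t \/ J0 t)) /\ Y t)
       = (fun t => (\bigcup_(X in F) X)%classic t \/ J0 t).
    apply: funext => t; apply: propext; split.
      case=> Y [[Z [FZ ->]]] [Zt|J0t]; last by right.
      by left; exists Z.
    case=> [[Z FZ Zt]|J0t].
      by exists (fun t => Z t \/ J0 t); split; [exists Z|left].
    by exists (fun t => X t \/ J0 t); split; [exists X|right].
  apply.
  - by move=> Y [Z [FZ ->]]; exact: FP.
  - move=> Y1 Y2 [Z1 [FZ1 ->]] [Z2 [FZ2 ->]].
    case: (Ftot _ _ FZ1 FZ2) => H; [left|right] => t [/H|]; by [left|right].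
  - by exists (fun t => X t \/ J0 t); exists X.
exists (fun t => A t \/ J0 t); split; first by move=> t; right.
split => // B PsiB MB t Bt.
apply: contrapT => nM.
apply: (Amax B).
  split; first by move=> u Au; apply: MB; left.
  by move=> BA; apply: nM; left; apply: BA.
rewrite /P'.
have -> : (fun t => B t \/ J0 t) = B; last exact: PsiB.
apply: funext => u; apply: propext; split; last by left.
by case=> // /(fun h => MB u (or_intror h)).
Qed.
Section Primes.
Variables (T : comPzRingType) (P : T -> Prop) (HP : prime_ideal P).
Lemma pr0 : P 0. Proof. by case: HP. Qed.
Lemma prD x y : P x -> P y -> P (x + y). Proof. by case: HP => _ H _ _ _; apply: H. Qed.
Lemma prM r x : P x -> P (r * x). Proof. by case: HP => _ _ H _ _; apply: H. Qed.
Lemma prMr r x : P x -> P (x * r). Proof. by rewrite mulrC; apply: prM. Qed.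
Lemma pr1 : ~ P 1. Proof. by case: HP. Qed.
Lemma prP x y : P (x * y) -> P x \/ P y. Proof. by case: HP => _ _ _ _ H; apply: H. Qed.
Lemma prNM x y : ~ P x -> ~ P y -> ~ P (x * y).
Proof. by move=> nx ny /prP [] //. Qed.
Lemma prX a n : P (a ^+ n) -> P a.
Proof.
elim: n => [|n IH]; first by rewrite expr0 => /pr1.
by rewrite exprS => /prP [] // /IH.
Qed.
End Primes.

Lemma prime_ext (T : comPzRingType) (P Q : T -> Prop) :
  (forall x, P x <-> Q x) -> prime_ideal P -> prime_ideal Q.
Proof.
move=> H [H0 HD HM H1 HP]; split.
- by apply/H.
- by move=> x y /H ? /H ?; apply/H; apply: HD.
- by move=> r x /H ?; apply/H; apply: HM.
- by move/H.
- by move=> x y /H /HP [] /H; [left|right].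
Qed.

Definition ideal (T : comPzRingType) (J : T -> Prop) :=
  [/\ J 0, (forall x y, J x -> J y -> J (x + y)) & (forall r x, J x -> J (r * x))].

Lemma prime_avoid (T : comPzRingType) (S : T -> Prop) :
  S 1 -> (forall x y, S x -> S y -> S (x * y)) -> ~ S 0 ->
  exists Q, prime_ideal Q /\ forall s, S s -> ~ Q s.
Proof.
move=> S1 SM nS0.
pose Psi (J : T -> Prop) := ideal J /\ forall s, S s -> ~ J s.
have H0 : Psi (fun x => x = 0).
  split.
    split=> //; first by move=> x y -> ->; rewrite addr0.
    by move=> r x ->; rewrite mulr0.
  by move=> s Ss s0; apply: nS0; rewrite -s0.
have Hch : forall F : (T -> Prop) -> Prop, (forall X, F X -> Psi X) ->
     (forall X Y, F X -> F Y -> (forall t, X t -> Y t) \/ (forall t, Y t -> X t)) ->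
     (exists X, F X) -> Psi (fun t => exists X, F X /\ X t).
  move=> F FP Ftot [X0 FX0]; split; first split.
  + by exists X0; split=> //; case: (FP _ FX0) => -[].
  + move=> x y [X1 [FX1 X1x]] [X2 [FX2 X2y]].
    case: (Ftot _ _ FX1 FX2) => H.
      exists X2; split=> //; case: (FP _ FX2) => -[_ D _] _; exact: D (H _ X1x) X2y.
    exists X1; split=> //; case: (FP _ FX1) => -[_ D _] _; exact: D X1x (H _ X2y).
  + move=> r x [X1 [FX1 X1x]]; exists X1; split=> //.
    by case: (FP _ FX1) => -[_ _ Mu] _; apply: Mu.
  + by move=> s Ss [X1 [FX1 X1s]]; case: (FP _ FX1) => _ H; exact: H Ss X1s.
have [M [_ [[[M0 MD MM] MS] Mmax]]] := zorn_max H0 Hch.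
have key : forall x, ~ M x -> exists m r, M m /\ S (m + r * x).
  move=> x nMx; apply: contrapT => nex.
  have := Mmax (fun t => exists m r, M m /\ t = m + r * x).
  have PsiB : Psi (fun t => exists m r, M m /\ t = m + r * x).
    split; first split.
    - by exists 0, 0; split=> //; rewrite mul0r addr0.
    - move=> a b [m1 [r1 [Mm1 ->]]] [m2 [r2 [Mm2 ->]]].
      exists (m1 + m2), (r1 + r2); split; first exact: MD.
      by rewrite mulrDl; ring.
    - move=> r a [m1 [r1 [Mm1 ->]]]; exists (r * m1), (r * r1); split; first exact: MM.
      by rewrite mulrDr mulrA.
    - by move=> s Ss [m [r [Mm se]]]; apply: nex; exists m, r; rewrite -se.
  move=> /(_ PsiB) H.
  have : M x.
    apply: H; last by exists 0, 1; split=> //; rewrite add0r mul1r.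
    by move=> t Mt; exists t, 0; rewrite mul0r addr0.
  by [].
exists M; split=> //; split=> //.
- by move=> M1; exact: MS S1 M1.
- move=> x y Mxy; apply: contrapT => /not_orP [nx ny].
  have [m1 [r1 [Mm1 S1']]] := key _ nx.
  have [m2 [r2 [Mm2 S2']]] := key _ ny.
  apply: (MS _ (SM _ _ S1' S2')).
  have -> : (m1 + r1 * x) * (m2 + r2 * y) =
     m1 * m2 + (r1 * x) * m2 + m1 * (r2 * y) + (r1 * r2) * (x * y) by ring.
  apply: (MD); last exact: (MM).
  apply: (MD); first apply: (MD).
  + exact: (MM).
  + exact: (MM).
  + by rewrite mulrC; apply: (MM).
Qed.

Section CA.
Variables (R : comPzRingType) (E : lmodType R).

Lemma specP (P : Spec R) : prime_ideal (proj1_sig P).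
Proof. exact: proj2_sig P. Qed.

Lemma SuppE (P : Spec R) :
  Supp E P <-> exists x : E, forall r, r *: x = 0 -> proj1_sig P r.
Proof.
split.
  move=> H; apply: contrapT => nex; apply: H => x.
  apply: contrapT => nt; apply: nex; exists x => r rx.
  by apply: contrapT => nPr; apply: nt; exists r.
case=> x Hx H; have [t [nPt tx]] := H x; exact: nPt (Hx _ tx).
Qed.

Lemma Supp_spec (Q P : Spec R) :
  Supp E Q -> (forall r, proj1_sig Q r -> proj1_sig P r) -> Supp E P.
Proof. by move=> /SuppE [x Hx] QP; apply/SuppE; exists x => r /Hx /QP. Qed.

Lemma Ass_Supp (P : Spec R) : Ass E P -> Supp E P.
Proof. by case=> x [Hx _]; apply/SuppE; exists x. Qed.

Lemma Supp_Ass (P : Spec R) : Supp E P ->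
  exists Q, Ass E Q /\ forall r, proj1_sig Q r -> proj1_sig P r.
Proof.
move=> /SuppE [x Hx].
pose Psi (C : R -> Prop) := [/\ prime_ideal (fun r => ~ C r),
   (forall r, r *: x = 0 -> ~ C r) & (forall r, ~ C r -> proj1_sig P r)].
have H0 : Psi (fun r => ~ proj1_sig P r).
  split.
  - apply: prime_ext (specP P) => r; split; [by move=> ? ?|exact: contrapT].
  - by move=> r /Hx ? ?.
  - by move=> r; apply: contrapT.
have Hch : forall F : (R -> Prop) -> Prop, (forall X, F X -> Psi X) ->
     (forall X Y, F X -> F Y -> (forall t, X t -> Y t) \/ (forall t, Y t -> X t)) ->
     (exists X, F X) -> Psi (fun t => exists X, F X /\ X t).
  move=> F FP Ftot [X0 FX0].
  have nU r : ~ (exists X, F X /\ X r) <-> forall X, F X -> ~ X r.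
    split; first by move=> H X FX Xr; apply: H; exists X.
    by move=> H [X [FX Xr]]; exact: H X FX Xr.
  split.
  - split.
    + by apply/nU => X /FP [pX _ _]; exact: pr0 pX.
    + move=> a b /nU Ha /nU Hb; apply/nU => X FX.
      by have [pX _ _] := FP _ FX; apply: prD pX _ _ (Ha _ FX) (Hb _ FX).
    + move=> r a /nU Ha; apply/nU => X FX.
      by have [pX _ _] := FP _ FX; apply: prM pX _ _ (Ha _ FX).
    + move=> /nU H1; have [pX _ _] := FP _ FX0; exact: pr1 pX (H1 _ FX0).
    + move=> a b /nU Hab; apply: contrapT => /not_orP [/contrapT na /contrapT nb].
      case: na => X1 [FX1 X1a]; case: nb => X2 [FX2 X2b].
      have [H12|H21] := Ftot _ _ FX1 FX2.
        have [pX _ _] := FP _ FX2.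
        by case: (prP pX (Hab _ FX2)) => H; [exact: H (H12 _ X1a)|exact: H].
      have [pX _ _] := FP _ FX1.
      by case: (prP pX (Hab _ FX1)) => H; [exact: H|exact: H (H21 _ X2b)].
  - by move=> r rx; apply/nU => X /FP [_ H _]; exact: H.
  - by move=> r /nU H; have [_ _ HX] := FP _ FX0; apply: HX; exact: H.
have [M [_ [[pM annM MP] Mmax]]] := zorn_max H0 Hch.
exists (exist _ _ pM); split; last exact: MP.
exists x; split; first exact: annM.
move=> Q' annQ' Q'M r Mr /=.
have PsiB : Psi (fun r => ~ proj1_sig Q' r).
  split.
  - apply: prime_ext (specP Q') => s; split; [by move=> ? ?|exact: contrapT].
  - by move=> s /annQ' ? ?.
  - by move=> s /contrapT /Q'M /MP.
apply: contrapT => nQ'r.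
apply: Mr; apply: (Mmax _ PsiB) => // s Ms Q's.
by have /= := Q'M _ Q's.
Qed.

Definition spec_closed (X : Spec R -> Prop) :=
  forall P : Spec R, (forall a, (forall Q, X Q -> proj1_sig Q a) -> proj1_sig P a) ->
  exists Q, X Q /\ forall r, proj1_sig Q r -> proj1_sig P r.

Lemma L_close (X : Spec R -> Prop) :
  (forall P, Supp E P <-> exists Q, X Q /\ forall r, proj1_sig Q r -> proj1_sig P r) ->
  spec_closed X -> zariski_closed (Supp E).
Proof.
move=> HS Hc; exists (fun a => forall Q, X Q -> proj1_sig Q a) => P; split.
  by move=> /HS [Q [XQ QP]] a /(_ _ XQ) /QP.
by move=> /Hc H; apply/HS.
Qed.

End CA.

Section CB.
Variable R : comPzRingType.

Lemma Vlist1 (a : R) (Q : Spec R) : Vlist [:: a] Q <-> proj1_sig Q a.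
Proof.
split; first by apply; rewrite inE.
by move=> Qa b; rewrite inE => /eqP ->.
Qed.

Lemma flat_open_Vlist (l : seq R) : flat_open (Vlist l).
Proof. by move=> P HP; exists l. Qed.

Lemma compact_closed (X : Spec R -> Prop) : flat_compact X -> spec_closed X.
Proof.
move=> Hc P HP; apply: contrapT => nex.
pose I := {a : R | ~ proj1_sig P a}.
have Hcov : forall Q, X Q -> exists i : I, Vlist [:: proj1_sig i] Q.
  move=> Q XQ.
  have [a [Qa nPa]] : exists a, proj1_sig Q a /\ ~ proj1_sig P a.
    apply: contrapT => nn; apply: nex; exists Q; split=> // r Qr.
    by apply: contrapT => nPr; apply: nn; exists r.
  by exists (exist _ a nPa); apply/Vlist1.
have [li Hli] := Hc I (fun i => Vlist [:: proj1_sig i]) (fun i => @flat_open_Vlist [:: proj1_sig i]) Hcov.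
have npr : ~ proj1_sig P (foldr (fun (i : I) acc => proj1_sig i * acc) 1 li).
  elim: li {Hli} => [|i li IH] /=; first exact: pr1 (specP P).
  have /= ni := proj2_sig i; exact (prNM (specP P) ni IH).
apply: npr; apply: HP => Q XQ.
have [i [Ii /Vlist1 Qi]] := Hli Q XQ.
elim: li Ii {Hli} => [|j li IH] //= [->|Ii].
  exact: prMr (specP Q) _ _ Qi.
exact: prM (specP Q) _ _ (IH Ii).
Qed.

Lemma finite_compact (X : Spec R -> Prop) : finite_set X -> flat_compact X.
Proof.
move=> [l Hl] I U Uo Hcov.
suff [li Hli] : exists li : list I, forall P, X P -> List.In P l ->
    exists i, List.In i li /\ U i P.
  by exists li => P XP; apply: Hli => //; exact: Hl.
elim: l {Hl} => [|P0 l [li IH]]; first by exists nil.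
have [XP0|nXP0] := pselect (X P0).
  have [i0 Ui0] := Hcov _ XP0.
  exists (i0 :: li) => P XP [<-|Pl]; first by exists i0; split=> //; left.
  by have [i [Ii Ui]] := IH P XP Pl; exists i; split=> //; right.
exists li => P XP [E0|Pl]; last exact: IH.
by case: nXP0; rewrite E0.
Qed.

Lemma preim_prime (T : comPzRingType) (f : {rmorphism R -> T}) (M : T -> Prop) :
  prime_ideal M -> prime_ideal (fun r => M (f r)).
Proof.
move=> pM; split.
- by rewrite rmorph0; exact: pr0 pM.
- by move=> x y Mx My; rewrite rmorphD; exact: prD pM _ _ Mx My.
- by move=> r x Mx; rewrite rmorphM; exact: prM pM _ _ Mx.
- by rewrite rmorph1; exact: pr1 pM.
- by move=> x y; rewrite rmorphM => /(prP pM).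
Qed.

Lemma proc_closed (X : Spec R -> Prop) : pro_constructible X -> spec_closed X.
Proof.
move=> [T [f Hf]] P HP.
pose S (t : T) := exists s, ~ proj1_sig P s /\ t = f s.
have S1 : S 1.
  by exists 1; split; [exact: pr1 (specP P)|rewrite rmorph1].
have SM : forall x y, S x -> S y -> S (x * y).
  move=> x y [s1 [n1 ->]] [s2 [n2 ->]]; exists (s1 * s2); split; last by rewrite rmorphM.
  exact (prNM (specP P) n1 n2).
have nS0 : ~ S 0.
  move=> [s [nPs fs0]]; apply: nPs; apply: HP => Q /Hf [Q' HQ'].
  by apply/HQ'; rewrite -fs0; exact: pr0 (proj2_sig Q').
have [M [pM MS]] := prime_avoid S1 SM nS0.
pose Q : Spec R := exist _ _ (preim_prime f pM).
exists Q; split.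
  by apply/Hf; exists (exist _ M pM).
move=> r /= Mr; apply: contrapT => nPr.
by apply: (MS (f r)) => //; exists r.
Qed.

End CB.

Section CC.
Variable R : comPzRingType.

Lemma prod_notin (P : R -> Prop) (HP : prime_ideal P) (G : seq R) :
  (forall g, g \in G -> ~ P g) -> ~ P (\prod_(g <- G) g).
Proof.
elim: G => [|g G IH] HG; first by rewrite big_nil; exact: pr1 HP.
rewrite big_cons; apply: (prNM HP); first by apply: HG; exact: mem_head.
by apply: IH => g' g'G; apply: HG; rewrite inE g'G orbT.
Qed.

Lemma spec_compact : flat_compact (fun _ : Spec R => True).
Proof.
move=> I U Uo Hcov.
apply: contrapT => nfin.
pose LL (l : seq R) := exists i, forall Q, Vlist l Q -> U i Q.
have Hav : forall L : list (seq R), (forall l, List.In l L -> LL l) ->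
   exists P : Spec R, forall l, List.In l L -> ~ Vlist l P.
  move=> L HL.
  have [li Hli] : exists li : list I, forall l, List.In l L ->
      exists i, List.In i li /\ forall Q, Vlist l Q -> U i Q.
    elim: L HL => [|l L IH] HL; first by exists nil.
    have [li Hli] := IH (fun l' H => HL l' (or_intror H)).
    have [i Hi] := HL l (or_introl erefl).
    exists (i :: li) => l' [<-|Hl']; first by exists i; split=> //; left.
    by have [j [Jj Uj]] := Hli l' Hl'; exists j; split=> //; right.
  apply: contrapT => nP; apply: nfin; exists li => P _.
  apply: contrapT => nU.
  have [l [Hl Vl]] : exists l, List.In l L /\ Vlist l P.
    by apply: contrapT => nl; apply: nP; exists P => l Hl Vl; apply: nl; exists l.
  by have [i [Ii Ui]] := Hli l Hl; apply: nU; exists i; split=> //; exact: Ui.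
pose Good (A : R -> Prop) := forall (L : list (seq R)) (G : seq R),
   (forall l, List.In l L -> LL l) -> (forall g, g \in G -> A g) ->
   exists P : Spec R, (forall g, g \in G -> ~ proj1_sig P g) /\
                      (forall l, List.In l L -> ~ Vlist l P).
have G0 : Good (fun _ => False).
  move=> L G HL HG; have [P HP] := Hav L HL; exists P; split=> // g /HG [].
have Gch : forall F : (R -> Prop) -> Prop, (forall X, F X -> Good X) ->
     (forall X Y, F X -> F Y -> (forall t, X t -> Y t) \/ (forall t, Y t -> X t)) ->
     (exists X, F X) -> Good (fun t => exists X, F X /\ X t).
  move=> F FP Ftot [X0 FX0] L G HL HG.
  have [X [FX GX]] : exists X, F X /\ forall g, g \in G -> X g.
    elim: G HG => [|g G IH] HG; first by exists X0.
    have [X [FX GX]] := IH (fun g' H => HG g' ltac:(by rewrite inE H orbT)).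
    have [Y [FY Yg]] := HG g (mem_head _ _).
    have [XY|YX] := Ftot _ _ FX FY.
      by exists Y; split=> // g'; rewrite inE => /orP [/eqP ->|/GX /XY].
    by exists X; split=> // g'; rewrite inE => /orP [/eqP ->|/GX] //; exact: YX.
  exact: FP FX L G HL GX.
have [A [_ [GA Amax]]] := zorn_max G0 Gch.
have meet : forall l, LL l -> exists a, a \in l /\ A a.
  move=> l0 Ll0; apply: contrapT => nm.
  have nA : forall a, a \in l0 -> ~ A a by move=> a al Aa; apply: nm; exists a.
  have bad : forall a : R, a \in l0 -> exists (L : list (seq R)) (G : seq R),
      (forall l, List.In l L -> LL l) /\ (forall g, g \in G -> A g) /\
      forall P : Spec R, (forall g, g \in G -> ~ proj1_sig P g) ->
         (forall l, List.In l L -> ~ Vlist l P) -> proj1_sig P a.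
    move=> a al; apply: contrapT => nb.
    have GB : Good (fun t => A t \/ t = a).
      move=> L G HL HG.
      have HG' : forall g, g \in [seq x <- G | x != a] -> A g.
        by move=> g; rewrite mem_filter => /andP [/eqP ga /HG] [].
      apply: contrapT => nP; apply: nb; exists L, [seq x <- G | x != a].
      split=> //; split=> // P HPG HPL.
      apply: contrapT => nPa; apply: nP; exists P; split=> // g gG.
      have [/eqP -> //|gna] := boolP (g == a).
      by apply: HPG; rewrite mem_filter gna gG.
    have := Amax _ GB (fun t At => or_introl At) a (or_intror erefl).
    exact: nA.
  have [L [G [HL [HG HP]]]] : exists (L : list (seq R)) (G : seq R),
      (forall l, List.In l L -> LL l) /\ (forall g, g \in G -> A g) /\
      forall P : Spec R, (forall g, g \in G -> ~ proj1_sig P g) ->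
         (forall l, List.In l L -> ~ Vlist l P) -> forall a, a \in l0 -> proj1_sig P a.
    elim: l0 {Ll0 nm nA} bad => [|a l IH] bad.
      by exists nil, [::]; split=> //; split=> // P _ _ a.
    have [L1 [G1 [HL1 [HG1 HP1]]]] := bad a (mem_head _ _).
    have [L2 [G2 [HL2 [HG2 HP2]]]] := IH (fun b bl => bad b ltac:(by rewrite inE bl orbT)).
    exists (L1 ++ L2), (G1 ++ G2); split.
      by move=> l'; rewrite List.in_app_iff => -[]; [exact: HL1|exact: HL2].
    split.
      by move=> g; rewrite mem_cat => /orP []; [exact: HG1|exact: HG2].
    move=> P HPG HPL b; rewrite inE => /orP [/eqP ->|bl].
      apply: HP1 => [g gG|l' lL].
        by apply: HPG; rewrite mem_cat gG.
      by apply: HPL; rewrite List.in_app_iff; left.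
    apply: HP2 => // [g gG|l' lL].
      by apply: HPG; rewrite mem_cat gG orbT.
    by apply: HPL; rewrite List.in_app_iff; right.
  have HL' : forall l, List.In l (l0 :: L) -> LL l.
    by move=> l [<-|lL] //; exact: HL.
  have [P [HPG HPL]] := GA (l0 :: L) G HL' HG.
  apply: (HPL l0 (or_introl erefl)) => b bl.
  exact: HP P HPG (fun l lL => HPL l (or_intror lL)) b bl.
pose S (s : R) := exists G : seq R, (forall g, g \in G -> A g) /\ s = \prod_(g <- G) g.
have S1 : S 1 by exists [::]; rewrite big_nil.
have SM : forall x y, S x -> S y -> S (x * y).
  move=> x y [G1 [H1 ->]] [G2 [H2 ->]]; exists (G1 ++ G2); split; last by rewrite big_cat.
  by move=> g; rewrite mem_cat => /orP []; [exact: H1|exact: H2].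
have nS0 : ~ S 0.
  move=> [G [HG G0']].
  have [P [HPG _]] := GA nil G (fun l (H : List.In l nil) => match H with end) HG.
  apply: (prod_notin (specP P) HPG); rewrite -G0'; exact: pr0 (specP P).
have [M [pM MS]] := prime_avoid S1 SM nS0.
pose Mp : Spec R := exist _ _ pM.
have [i Ui] := Hcov Mp Logic.I.
have [l [Vl Vsub]] := Uo i Mp Ui.
have [a [al Aa]] := meet l (ex_intro _ i Vsub).
apply: (MS a); last exact: Vl.
by exists [:: a]; split; [move=> g; rewrite inE => /eqP ->|rewrite big_seq1].
Qed.

Lemma fclosed_compact (X : Spec R -> Prop) : flat_closed X -> flat_compact X.
Proof.
move=> Xc I U Uo Hcov.
pose U' (o : option I) := match o with Some i => U i | None => fun P => ~ X P end.
have Uo' : forall o, flat_open (U' o) by case=> [i|] //=; exact: Uo.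
have Hcov' : forall P : Spec R, True -> exists o, U' o P.
  move=> P _; have [XP|nXP] := pselect (X P); last by exists None.
  by have [i Ui] := Hcov P XP; exists (Some i).
have [li' Hli'] := spec_compact Uo' Hcov'.
have [li inli] : exists li : list I, forall j, List.In (Some j) li' -> List.In j li.
  exists (foldr (fun o acc => match o with Some j => j :: acc | None => acc end) nil li').
  elim: li' {Hli'} => [|o l IH] j //= [->|H] /=; first by left.
  by case: o => [k|]; [right|]; apply: IH.
exists li => P XP; have [[j|] [Ij Uj]] := Hli' P Logic.I.
  by exists j; split=> //; exact: inli.
by case: Uj.
Qed.

End CC.
Local Open Scope quotient_scope.
Import Quotient.
Definition pideal (R : comPzRingType) (J : R -> Prop) :=
  [/\ J 0, (forall x y, J x -> J y -> J (x + y)) & (forall r x, J x -> J (r * x))].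

Section Quo.
Variables (R : comPzRingType) (J : R -> Prop) (HJ : pideal J).

Definition Jb : {pred R} := fun x => `[< J x >].

Lemma JbP x : (x \in Jb) = `[< J x >]. Proof. by []. Qed.

Lemma Jb_zmod : zmod_closed Jb.
Proof.
case: HJ => J0 JD JM; split.
  by rewrite JbP; apply/asboolP.
move=> u v; rewrite !JbP => /asboolP Ju /asboolP Jv; apply/asboolP.
apply: JD => //; rewrite -mulN1r; exact: JM.
Qed.

HB.instance Definition _ := GRing.isZmodClosed.Build R Jb Jb_zmod.

Definition QT := Quotient.quot Jb.
HB.instance Definition _ := Choice.on QT.
HB.instance Definition _ := GRing.Zmodule.on QT.
HB.instance Definition _ := EqQuotient.on QT.
Definition qone : QT := lift_cst QT 1.
Definition qmul := lift_op2 QT *%R.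
Canonical pi_qone_morph := PiConst qone.

Lemma Jb_mul a u : u \in Jb -> a * u \in Jb.
Proof. case: HJ => _ _ JM; rewrite !JbP => /asboolP H; apply/asboolP; exact: JM. Qed.

Lemma pi_qmul : {morph \pi_QT : x y / x * y >-> qmul x y}.
Proof.
move=> x y; unlock qmul; apply/eqP; rewrite piE Quotient.equivE.
rewrite -[_ * _](addrNK (x * repr (\pi_QT y))) -mulrBr.
rewrite -addrA -mulrBl rpredD //.
  by rewrite Jb_mul // Quotient.idealrDE opprK reprK.
by rewrite mulrC Jb_mul // Quotient.idealrDE opprK reprK.
Qed.
Canonical pi_qmul_morph := PiMorph2 pi_qmul.

Lemma qmulA: associative qmul.
Proof. by move=> x y z; rewrite -[x]reprK -[y]reprK -[z]reprK !piE mulrA. Qed.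
Lemma qmulC: commutative qmul.
Proof. by move=> x y; rewrite -[x]reprK -[y]reprK !piE mulrC. Qed.
Lemma qmul1: left_id qone qmul.
Proof. by move=> x; rewrite -[x]reprK !piE mul1r. Qed.
Lemma qmul_addl: left_distributive qmul +%R.
Proof.
move=> x y z; rewrite -[x]reprK -[y]reprK -[z]reprK.
by rewrite !piE mulrDl.
Qed.

HB.instance Definition _ := GRing.Zmodule_isComPzRing.Build QT qmulA qmulC qmul1 qmul_addl.

Definition qpi (x : R) : QT := \pi_QT x.

Lemma qpi_zmod : zmod_morphism qpi.
Proof. by move=> x y; rewrite /qpi !piE. Qed.
HB.instance Definition _ := GRing.isZmodMorphism.Build R QT qpi qpi_zmod.
Lemma qpi_mon : monoid_morphism qpi.
Proof. split; last by move=> x y; rewrite /qpi !piE. by rewrite /qpi piE. Qed.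
HB.instance Definition _ := GRing.isMonoidMorphism.Build R QT qpi qpi_mon.

Definition qpiR : {rmorphism R -> QT} := qpi.

Lemma qpi_eq x y : qpi x = qpi y <-> J (x - y).
Proof.
split.
  by move=> /eqP; rewrite /qpi piE Quotient.equivE JbP => /asboolP.
by move=> H; apply/eqP; rewrite /qpi piE Quotient.equivE JbP; apply/asboolP.
Qed.

Lemma qpi_surj (q : QT) : exists x, q = qpi x.
Proof. by exists (repr q); rewrite /qpi reprK. Qed.

End Quo.

Section CD.
Variable R : comPzRingType.

Lemma closed_proc (A : R -> Prop) : pro_constructible (Vset A).
Proof.
pose J (r : R) := forall P : Spec R, Vset A P -> proj1_sig P r.
have HJ : pideal J.
  split.
  - by move=> P _; exact: pr0 (specP P).
  - by move=> x y Jx Jy P VP; exact: prD (specP P) _ _ (Jx P VP) (Jy P VP).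
  - by move=> r x Jx P VP; exact: prM (specP P) _ _ (Jx P VP).
exists (QT HJ), (qpiR HJ) => P; split.
  move=> VP.
  have key : forall x y, qpi HJ x = qpi HJ y -> proj1_sig P y -> proj1_sig P x.
    move=> x y /qpi_eq Jxy Py.
    have -> : x = (x - y) + y by rewrite subrK.
    exact: prD (specP P) _ _ (Jxy P VP) Py.
  pose Q' (q : QT HJ) := exists x, q = qpi HJ x /\ proj1_sig P x.
  have pQ' : prime_ideal Q'.
    split.
    - by exists 0; split; [rewrite rmorph0|exact: pr0 (specP P)].
    - move=> a b [x [-> Px]] [y [-> Py]]; exists (x + y); split; first by rewrite rmorphD.
      exact: prD (specP P) _ _ Px Py.
    - move=> r a [x [-> Px]]; have [z ->] := qpi_surj r.
      exists (z * x); split; first by rewrite rmorphM.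
      exact: prM (specP P) _ _ Px.
    - move=> [x [e Px]]; apply: (pr1 (specP P)); apply: key Px.
      by rewrite rmorph1.
    - move=> a b; have [x ->] := qpi_surj a; have [y ->] := qpi_surj b.
      move=> [z [e Pz]].
      have : proj1_sig P (x * y) by apply: key Pz; rewrite rmorphM.
      by case/(prP (specP P)) => H; [left|right]; eexists; split; last exact: H.
  exists (exist _ Q' pQ') => r /=; split; first by move=> Pr; exists r.
  by move=> [x [e Px]]; apply: key Px.
move=> [Q' HQ'] a Aa; apply/HQ'.
have -> : qpiR HJ a = qpiR HJ 0.
  by apply/(qpi_eq HJ); rewrite subr0 => P0 VP0; exact: VP0.
rewrite rmorph0; exact: pr0 (proj2_sig Q').
Qed.

End CD.

Section CE.
Variables (R : comPzRingType) (E : lmodType R).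

Lemma afg_props : afg E ->
  (forall P, Supp E P <-> Vset (ann_mod E) P) /\
  (forall a, OR E a <-> radical (ann_mod E) a).
Proof.
move=> [S [f [act [[aD aDl aM a1 af] [gens Hg]]]]].
have act0 s : act s 0 = 0.
  have h := aD s 0 0; rewrite addr0 in h.
  by apply: (addrI (act s 0)); rewrite -h addr0.
have kill : forall t : R, (forall g, g \in gens -> t *: g = 0) -> forall x : E, t *: x = 0.
  move=> t Ht x; have [c ->] := Hg x.
  rewrite scaler_sumr; apply: big1 => i _.
  rewrite -af -aM mulrC aM af Ht ?act0 //; exact: mem_nth (ltn_ord i).
split.
  move=> P; split.
    by move=> /SuppE [x Hx] a Ha; apply: Hx; exact: Ha.
  move=> VP; apply: contrapT => nS.
  have H0 : loc_prime_zero E P by apply: contrapT.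
  have [t [nPt Ht]] : exists t, ~ proj1_sig P t /\ forall g, g \in gens -> t *: g = 0.
    elim: (gens) => [|g l [t [nPt Ht]]]; first by exists 1; split=> //; exact: pr1 (specP P).
    have [u [nPu ug]] := H0 g.
    exists (u * t); split; first exact (prNM (specP P) nPu nPt).
    move=> g'; rewrite inE => /orP [/eqP ->|g'l].
      by rewrite mulrC -scalerA ug scaler0.
    by rewrite -scalerA Ht ?scaler0.
  by apply: nPt; apply: VP; exact: kill.
move=> a; split.
  move=> Ha.
  have [N HN] : exists N, forall g, g \in gens -> a ^+ N *: g = 0.
    elim: (gens) => [|g l [N HN]]; first by exists 0%N.
    have [n Hn] := Ha g.
    exists (n + N)%N => g'; rewrite inE exprD => /orP [/eqP ->|g'l].
      by rewrite mulrC -scalerA Hn scaler0.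
    by rewrite -scalerA HN ?scaler0.
  by exists N; exact: kill.
by move=> [n Hn] x; exists n; exact: Hn.
Qed.

Lemma fl_fg : finite_length E ->
  exists gens : seq E, forall x, exists c : nat -> R,
    x = \sum_(i < size gens) c i *: nth 0 gens i.
Proof.
move=> [n Hn]; apply: contrapT => nfg.
have nx : forall s : seq E, exists x,
    ~ exists c : nat -> R, x = \sum_(i < size s) c i *: nth 0 s i.
  move=> s; apply: contrapT => H; apply: nfg; exists s => x.
  by apply: contrapT => Hx; apply: H; exists x.
pose Mi (s : seq E) (i : nat) (x : E) :=
  exists c : nat -> R, x = \sum_(j < i) c j *: nth 0 s j.
have build : forall k, exists s : seq E, size s = k /\
    forall i, (i < k)%N -> ~ Mi s i (nth 0 s i).
  elim=> [|k [s [sz Hs]]]; first by exists [::].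
  have [x Hx] := nx s.
  exists (rcons s x); split; first by rewrite size_rcons sz.
  move=> i; rewrite ltnS leq_eqVlt => /orP [/eqP ->|ik].
    rewrite nth_rcons sz ltnn eqxx => -[c Hc]; apply: Hx; exists c.
    rewrite Hc sz; apply: eq_bigr => j _; by rewrite nth_rcons sz ltn_ord.
  rewrite nth_rcons sz ik => -[c Hc]; apply: (Hs i ik); exists c.
  rewrite Hc; apply: eq_bigr => j _; by rewrite nth_rcons sz (ltn_trans (ltn_ord j) ik).
have [s [sz Hs]] := build n.+1.
have Hsub : forall i, submodule (Mi s i).
  move=> i; split.
  - by exists (fun _ => 0); rewrite big1 // => j _; rewrite scale0r.
  - move=> x y [c1 ->] [c2 ->]; exists (fun j => c1 j + c2 j).
    by rewrite -big_split; apply: eq_bigr => j _; rewrite scalerDl.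
  - move=> r x [c ->]; exists (fun j => r * c j).
    by rewrite scaler_sumr; apply: eq_bigr => j _; rewrite scalerA.
have Hch : forall i, (i < n.+1)%N ->
    (forall x, Mi s i x -> Mi s i.+1 x) /\ (exists x, Mi s i.+1 x /\ ~ Mi s i x).
  move=> i ilt; split.
    move=> x [c ->]; exists (fun j => if (j < i)%N then c j else 0).
    rewrite big_ord_recr /= ltnn scale0r addr0.
    by apply: eq_bigr => j _; rewrite /= ltn_ord.
  exists (nth 0 s i); split; last exact: Hs.
  exists (fun j => if j == i then 1 else 0).
  rewrite big_ord_recr /= eqxx scale1r big1 ?add0r // => j _.
  by rewrite /= (ltn_eqF (ltn_ord j)) scale0r.
by have := Hn n.+1 (Mi s) Hsub Hch; rewrite ltnn.
Qed.

Lemma fl_afg : finite_length E -> afg E.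
Proof.
move=> /fl_fg [gens Hg].
exists R, idfun, (fun s (x : E) => s *: x); split.
  split=> //.
  - by move=> s x y; rewrite scalerDr.
  - by move=> s t x; rewrite scalerDl.
  - by move=> s t x; rewrite scalerA.
  - by move=> x; rewrite scale1r.
by exists gens.
Qed.

End CE.

Theorem proposition2p11 (R : comPzRingType) (E : lmodType R) :
  (zariski_closed (Supp E) <-> pro_constructible (Supp E)) /\
  (finite_set (Supp E) -> zariski_closed (Supp E)) /\
  (flat_compact (Ass E) -> zariski_closed (Supp E)) /\
  (pro_constructible (Ass E) -> zariski_closed (Supp E)) /\
  (finite_set (Ass E) -> zariski_closed (Supp E)) /\
  (flat_closed (Ass E) -> zariski_closed (Supp E)) /\
  (finite_length E -> zariski_closed (Supp E)) /\
  (afg E ->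
     zariski_closed (Supp E) /\
     (forall P, Vset (OR E) P <-> Supp E P) /\
     (forall P, Supp E P <-> Vset (ann_mod E) P) /\
     (forall a, OR E a <-> radical (ann_mod E) a)).
Proof.
have eS : forall P, Supp E P <-> exists Q, Supp E Q /\
    forall r, proj1_sig Q r -> proj1_sig P r.
  move=> P; split; first by move=> SP; exists P.
  by move=> [Q [SQ QP]]; exact: Supp_spec SQ QP.
have eA : forall P, Supp E P <-> exists Q, Ass E Q /\
    forall r, proj1_sig Q r -> proj1_sig P r.
  move=> P; split; first exact: Supp_Ass.
  by move=> [Q [AQ QP]]; exact: Supp_spec (Ass_Supp AQ) QP.
have Hafg : afg E ->
     zariski_closed (Supp E) /\
     (forall P, Vset (OR E) P <-> Supp E P) /\
     (forall P, Supp E P <-> Vset (ann_mod E) P) /\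
     (forall a, OR E a <-> radical (ann_mod E) a).
  move=> /afg_props [H1 H2].
  split; first by exists (ann_mod E).
  split=> //.
  move=> P; split.
    move=> VP; apply/H1 => a Ha; apply: VP => x; exists 1%N.
    by rewrite expr1; exact: Ha.
  move=> /SuppE [x Hx] a Ha; have [n Hn] := Ha x.
  exact: (prX (specP P) (Hx _ Hn)).
split.
  split.
    move=> [A HA]; have [T [f Hf]] := closed_proc A.
    exists T, f => P; split; [by move/HA/Hf|by move/Hf/HA].
  by move=> H; apply: (L_close eS); exact: proc_closed.
split; first by move=> H; apply: (L_close eS); exact: compact_closed (finite_compact H).
split; first by move=> H; apply: (L_close eA); exact: compact_closed.
split; first by move=> H; apply: (L_close eA); exact: proc_closed.
split; first by move=> H; apply: (L_close eA); exact: compact_closed (finite_compact H).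
split; first by move=> H; apply: (L_close eA); exact: compact_closed (fclosed_compact H).
split; first by move=> /fl_afg /Hafg [].
exact: Hafg.
Qed.
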